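(* Let $n\ge2$ and let $a_1,\dots,a_{n-1}\in\mathbb C$ be fixed. For $a\in\mathbb C$ set $g_a(z)=z^n+a^n$ and $f_a(z)=z^n+a_{n-1}z^{n-1}+\cdots+a_1z+a^n$. Then $$\lim_{|a|\to+\infty}d_F\Bigl(Z\bigl(S(a_{n-1}/n)g_a\bigr),Z(f_a)\Bigr)=0.$$
   Context: For $\beta\in\mathbb C$, $(S(\beta)f)(z)=f(\beta+z)$. $Z(f)$ denotes the roots of $f$ counted with multiplicity. For multisets $A=\{u_1,\dots,u_m\}$, $B=\{v_1,\dots,v_m\}$ in $\mathbb C$, $d_F(A,B)=\min_{\sigma}\max_k|u_k-v_{\sigma(k)}|$ over permutations $\sigma$ of $\{1,\dots,m\}$. *)

(* Defs.v *)
(* The complex field is modelled by an arbitrary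
   numClosedFieldType C (algebraically closed field with norm/order, e.g. C). *)
From HB Require Import structures.
From mathcomp Require Import all_boot all_order all_algebra.
Set Implicit Arguments. Unset Strict Implicit. Unset Printing Implicit Defensive.
Import Order.TTheory GRing.Theory Num.Theory.
Local Open Scope ring_scope.

Definition shiftp (C : numClosedFieldType) (beta : C) (f : {poly C}) : {poly C} :=
  f \Po ('X + beta%:P).

(* rs is a listing of the roots of the monic polynomial p, with multiplicity:
   p = prod_(r <- rs) (X - r). *)
Definition is_root_multiset (C : numClosedFieldType) (p : {poly C}) (rs : seq C) : Prop :=
  p = \prod_(r <- rs) ('X - r%:P).

Definition match_cost (C : numClosedFieldType) (u w : seq C) : C :=
  \big[Num.max/0]_(i < size u) `|u`_i - w`_i|.

(* d_F(A,B) = min over permutations sigma of max_k |u_k - v_sigma(k)|: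
   minimum of match_cost u w over all rearrangements w of v. *)
Definition dF (C : numClosedFieldType) (u v : seq C) : C :=
  match permutations v with
  | [::] => 0
  | w0 :: ws => foldr (fun w acc => Num.min (match_cost u w) acc) (match_cost u w0) ws
  end.

Definition g_poly (C : numClosedFieldType) (n : nat) (a : C) : {poly C} :=
  'X^n + (a ^+ n)%:P.

(* f_a(z) = z^n + a_{n-1} z^{n-1} + ... + a_1 z + a^n ; coefficients given by c i = a_i *)
Definition f_poly (C : numClosedFieldType) (n : nat) (c : nat -> C) (a : C) : {poly C} :=
  'X^n + \sum_(1 <= i < n) c i *: 'X^i + (a ^+ n)%:P.

(* Main.v *)
Require Import Defs.
From HB Require Import structures.
From mathcomp Require Import all_boot all_order all_algebra.
Import Order.TTheory GRing.Theory Num.Theory.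
Local Open Scope ring_scope.

Section S.
Variable C : numClosedFieldType.

Lemma minr_props (x y : C) : 0 <= x -> 0 <= y ->
  [/\ Num.min x y <= x, Num.min x y <= y & 0 <= Num.min x y].
Proof.
move=> hx hy; rewrite /Num.min /Order.min.
case: ifP => hxy.
  by split=> //; apply: ltW.
have hyx : y <= x by rewrite real_leNgt ?ger0_real // hxy.
by split.
Qed.

Lemma maxr_cases (x y : C) : Num.max x y = x \/ Num.max x y = y.
Proof. rewrite /Num.max /Order.max; case: ifP; auto. Qed.

Lemma match_cost_ge0 (u w : seq C) : 0 <= match_cost u w.
Proof.
rewrite /match_cost; apply: (big_ind (fun x => 0 <= x)) => //.
by move=> x y hx hy; case: (maxr_cases x y) => ->.
Qed.

Lemma match_cost_lt (u w : seq C) (e : C) : 0 < e ->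
  (forall i, (i < size u)%N -> `|u`_i - w`_i| < e) -> match_cost u w < e.
Proof.
move=> he hi; rewrite /match_cost; apply: (big_ind (fun x => x < e)) => //.
  by move=> x y hx hy; case: (maxr_cases x y) => ->.
by move=> i _; apply: hi.
Qed.

Lemma foldr_min_le (u : seq C) ws b :
  0 <= b ->
  let F := foldr (fun w acc => Num.min (match_cost u w) acc) b ws in
  [/\ 0 <= F, F <= b & forall x, x \in ws -> F <= match_cost u x].
Proof.
move=> hb; elim: ws => [|w ws [IH1 IH2 IH3]] /=; first by split.
have [h1 h2 h3] := minr_props _ _ (match_cost_ge0 u w) IH1.
split=> //; first exact: le_trans h2 IH2.
move=> x; rewrite inE => /orP [/eqP -> //| hx].
exact: le_trans h2 (IH3 x hx).
Qed.

Lemma dF_le (u v w : seq C) : perm_eq w v -> dF u v <= match_cost u w.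
Proof.
move=> hp; have : w \in permutations v by rewrite mem_permutations.
rewrite /dF; case: (permutations v) => [//|w0 ws].
have [_ h2 h3] := foldr_min_le u ws _ (match_cost_ge0 u w0).
rewrite inE => /orP [/eqP -> //|hx]; exact: h3.
Qed.

Lemma matching (rs1 rs2 : seq C) e : 0 < e -> uniq rs1 -> size rs1 = size rs2 ->
  (forall v, v \in rs1 -> exists2 r, r \in rs2 & `|v - r| < e) ->
  (forall v v' r, v \in rs1 -> v' \in rs1 -> `|v - r| < e -> `|v' - r| < e -> v = v') ->
  dF rs1 rs2 < e.
Proof.
move=> he u1 hsz hex huniq.
pose f := fun v => nth 0 rs2 (find (fun r => `|v - r| < e) rs2).
have hf : forall v, v \in rs1 -> f v \in rs2 /\ `|v - f v| < e.
  move=> v hv; have [r hr hvr] := hex v hv.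
  have hh : has (fun r => `|v - r| < e) rs2 by apply/hasP; exists r.
  split; first by rewrite /f mem_nth // -has_find.
  exact: (nth_find 0 hh).
pose w := map f rs1.
have uw : uniq w.
  rewrite map_inj_in_uniq // => v v' hv hv' heq.
  have [_ h1] := hf v hv; have [_ h2] := hf v' hv'.
  by apply: (huniq v v' (f v)) => //; rewrite heq.
have sw : {subset w <= rs2} by move=> x /mapP [v hv ->]; have [] := hf v hv.
have szw : size w = size rs1 by rewrite size_map.
have hle : (size rs2 <= size w)%N by rewrite szw hsz.
have [_ hwe] := uniq_min_size uw sw hle.
have u2 : uniq rs2 := leq_size_uniq uw sw hle.
have hp : perm_eq w rs2 by apply: uniq_perm.
apply: (le_lt_trans (dF_le rs1 _ _ hp)).
apply: match_cost_lt => // i hi.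
rewrite /w (nth_map 0) //.
by have [] := hf _ (mem_nth 0 hi).
Qed.

Lemma pow_le (x y : C) k : 0 <= x -> x <= y -> x ^+ k <= y ^+ k.
Proof. move=> hx hxy; apply: lerXn2r; rewrite // nnegrE; exact: le_trans hxy. Qed.

Lemma horner_bound (p : {poly C}) m x : (size p <= m.+1)%N ->
  `|p.[x]| <= (\sum_(i < size p) `|p`_i|) * (1 + `|x|) ^+ m.
Proof.
move=> hs; rewrite horner_coef mulr_suml.
apply: (le_trans (ler_norm_sum _ _ _)); apply: ler_sum => i _.
rewrite normrM normrX; apply: ler_wpM2l => //.
have h1 : 1 <= 1 + `|x| by rewrite lerDl.
apply: (le_trans (pow_le _ (1 + `|x|) i (normr_ge0 x) _)); first by rewrite lerDr.
apply: ler_weXn2l => //; have := ltn_ord i; move=> hi; exact: leq_trans hi hs.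
Qed.

Lemma sep (u u' : C) n : (0 < n)%N -> u ^+ n = u' ^+ n -> u != u' ->
  `|u| <= n%:R * `|u - u'|.
Proof.
move=> hn hpow hne.
have [->|u0] := eqVneq u 0; first by rewrite normr0 mulr_ge0.
pose z := u' / u.
have hz : z ^+ n = 1 by rewrite /z exprMn exprVn -hpow divff // expf_neq0.
have hz1 : z != 1.
  apply: contra hne => /eqP h; apply/eqP.
  by move: h; rewrite /z => /(congr1 (fun t => t * u)); rewrite divfK // mul1r => ->.
have nz : `|z| = 1.
  apply/eqP; rewrite -(pexpr_eq1 hn) ?normr_ge0 // -normrX hz normr1 //.
have hsum : \sum_(i < n) z ^+ i = 0.
  have := subrX1 z n; rewrite hz subrr => /esym /eqP.
  by rewrite mulf_eq0 subr_eq0 (negPf hz1) /= => /eqP.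
have hi : forall i, `|1 - z ^+ i| <= i%:R * `|1 - z|.
  elim=> [|i IH]; first by rewrite expr0 subrr normr0 mul0r.
  have -> : 1 - z ^+ i.+1 = (1 - z ^+ i) + z ^+ i * (1 - z).
    by rewrite exprS mulrBr mulr1 addrA subrK mulrC.
  apply: (le_trans (ler_normD _ _)).
  rewrite normrM normrX nz expr1n mul1r -nat1r mulrDl mul1r addrC.
  by rewrite lerD2l.
have hN : n%:R = \sum_(i < n) (1 - z ^+ i).
  by rewrite sumrB hsum subr0 sumr_const card_ord.
have key : n%:R <= n%:R * (n%:R * `|1 - z|) :> C.
  rewrite -[X in X <= _]ger0_norm ?ler0n // {1}hN.
  apply: (le_trans (ler_norm_sum _ _ _)).
  apply: (le_trans (y := \sum_(i < n) (n%:R * `|1 - z|))).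
    apply: ler_sum => i _; apply: (le_trans (hi i)); apply: ler_wpM2r => //.
    by rewrite ler_nat ltnW.
  by rewrite sumr_const card_ord [X in _ <= X]mulr_natl.
have hn0 : 0 < n%:R :> C by rewrite ltr0n.
have h1 : 1 <= n%:R * `|1 - z|.
  by rewrite -(@ler_pM2l _ n%:R hn0) mulr1.
have -> : u - u' = u * (1 - z) by rewrite mulrBr mulr1 /z mulrCA divff // mulr1.
by rewrite normrM mulrCA -[X in X <= _]mulr1 ler_wpM2l.
Qed.

Lemma uniq_of_norem (rs : seq C) :
  (forall x, x \in rs -> x \in rem x rs -> False) -> uniq rs.
Proof.
elim: rs => [//|y s IH] H /=; apply/andP; split.
  apply/negP => hy; apply: (H y); first by rewrite mem_head.
  by rewrite /= eqxx.
apply: IH => x hx hr; apply: (H x); first by rewrite inE hx orbT.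
rewrite /=; case: eqP => [hyx|_]; first by rewrite -hyx in hx *. 
by rewrite inE hr orbT.
Qed.

Lemma deriv_double (rs : seq C) x : x \in rs -> x \in rem x rs ->
  (\prod_(r <- rs) ('X - r%:P))^`().[x] = 0.
Proof.
move=> hx hr; rewrite (perm_big _ (perm_to_rem hx)) big_cons derivM.
have hq : (\prod_(r <- rem x rs) ('X - r%:P)).[x] = 0.
  by apply/eqP; rewrite -/(root _ x) root_prod_XsubC.
by rewrite hornerD !hornerM hq hornerXsubC subrr !mul0r mulr0 add0r.
Qed.

Lemma zmod_rearr (x t r s : {poly C}) : (x + (t + r)) - x - (s + t) = r - s.
Proof.
rewrite [x + _]addrC addrK opprD addrA [t + r]addrC -addrA.
by rewrite [- s - t]addrC addrA addrK.
Qed.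

Lemma sizeH (m : nat) (c : nat -> C) (b : C) : b *+ m.+2 = c m.+1 ->
  (size (('X + b%:P) ^+ m.+2 - 'X^(m.+2) - \sum_(1 <= i < m.+2) c i *: 'X^i)%R <= m.+1)%N.
Proof.
move=> hb.
rewrite exprDn big_ord_recl big_ord_recl big_nat_recr //=.
rewrite subn0 expr0 mulr1 bin0 mulr1n.
have E1 : 'X^(m.+2 - bump 0 0) * b%:P ^+ bump 0 0 *+ 'C(m.+2, bump 0 0)
     = c m.+1 *: 'X^(m.+1).
  by rewrite /bump /= subSS subn0 expr1 bin1 mulrC mul_polyC scalerMnl hb.
rewrite E1 zmod_rearr.
apply: leq_trans (size_polyD _ _) _; rewrite size_polyN geq_max; apply/andP; split.
  apply: leq_trans (size_sum _ _ _) _; apply/bigmax_leqP => i _.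
  rewrite -polyC_exp mulrC mul_polyC scalerMnl.
  apply: leq_trans (size_scale_leq _ _) _; rewrite size_polyXn.
  by rewrite /bump /= !add1n subSS subSS ltnS leq_subr.
apply: leq_trans (size_sum _ _ _) _; apply/bigmax_leqP_seq => i hi _.
apply: leq_trans (size_scale_leq _ _) _; rewrite size_polyXn.
by move: hi; rewrite mem_index_iota => /andP [_ ->].
Qed.
Lemma prod_ge (s : seq C) (P : pred C) (F : C -> C) k : 0 <= k ->
  (forall x, x \in s -> P x -> k <= F x) -> k ^+ count P s <= \prod_(x <- s | P x) F x.
Proof.
move=> hk; elim: s => [|y s IH] H; first by rewrite big_nil expr0.
rewrite big_cons /=; have IH' : k ^+ count P s <= \prod_(x <- s | P x) F x.
  by apply: IH => x hx; apply: H; rewrite inE hx orbT.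
case: (P y) (H y (mem_head _ _)) => /= hy; last by rewrite add0n.
rewrite add1n exprS; exact: ler_pM hk (exprn_ge0 _ hk) (hy isT) IH'.
Qed.

Lemma ineqA (T K A : C) m : 1 <= T -> A < T -> 0 <= K -> K * 4^+(m.+2) < A ->
  (T / 4)^+(m.+2) <= K * T^+m -> False.
Proof.
move=> hT hAT hK hKA h.
have T0 : 0 < T by apply: lt_le_trans hT; exact: ltr01.
have h2 : T^+2 * T^+m <= (K * 4^+(m.+2)) * T^+m.
  rewrite -exprD add2n -[X in X <= _](@mulfK _ (4^+(m.+2))) ?expf_neq0 ?pnatr_eq0 //.
  rewrite mulrAC -expr_div_n [X in _ <= X]mulrAC ler_wpM2r //; exact: exprn_ge0.
rewrite ler_pM2r ?exprn_gt0 // in h2.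
have : T <= T^+2 by rewrite expr2 ler_peMl // ltW.
move=> hTT; have := lt_le_trans (lt_trans hKA hAT) hTT.
by move=> h3; have := lt_le_trans h3 h2; rewrite ltxx.
Qed.

Lemma ineqB (a K e N : C) m : 0 < a -> 0 < N -> 0 <= K ->
  K * 3^+m * (2 * N)^+(m.+1) < e * a ->
  e * (a / (2 * N))^+(m.+1) <= K * (3 * a)^+m -> False.
Proof.
move=> ha hN hK hlt h.
have h2N : 0 < 2 * N by rewrite mulr_gt0.
have X0 : 0 < (2 * N)^+(m.+1) by rewrite exprn_gt0.
have E1 : e * (a / (2 * N))^+(m.+1) * (2 * N)^+(m.+1) = (e * a) * a^+m.
  by rewrite expr_div_n -mulrA divfK ?expf_neq0 ?gt_eqF // exprS mulrA.
have E2 : K * (3 * a)^+m * (2 * N)^+(m.+1) = (K * 3^+m * (2 * N)^+(m.+1)) * a^+m.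
  by rewrite exprMn !mulrA mulrAC.
have := ler_wpM2r (ltW X0) h; rewrite E1 E2 ler_pM2r ?exprn_gt0 // => h3.
by have := lt_le_trans hlt h3; rewrite ltxx.
Qed.

Lemma ineqC (a K N : C) m : 1 <= a -> 0 < N -> 0 <= K ->
  K * 3^+m * (4 * N)^+(m.+2) < a ->
  (a / (4 * N))^+(m.+2) <= K * (3 * a)^+m -> False.
Proof.
move=> ha hN hK hlt h.
have a0 : 0 < a by apply: lt_le_trans ha; exact: ltr01.
have h4N : 0 < 4 * N by rewrite mulr_gt0.
have X0 : 0 < (4 * N)^+(m.+2) by rewrite exprn_gt0.
have E1 : (a / (4 * N))^+(m.+2) * (4 * N)^+(m.+2) = a^+2 * a^+m.
  by rewrite expr_div_n divfK ?expf_neq0 ?gt_eqF // -exprD add2n.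
have E2 : K * (3 * a)^+m * (4 * N)^+(m.+2) = (K * 3^+m * (4 * N)^+(m.+2)) * a^+m.
  by set X := (4 * N)^+(m.+2); rewrite [(3 * a)^+m]exprMn (mulrA K) mulrAC.
have := ler_wpM2r (ltW X0) h; rewrite E1 E2 ler_pM2r ?exprn_gt0 // => h3.
have haa : a <= a^+2 by rewrite expr2 ler_peMl // ltW.
by have := lt_le_trans (lt_le_trans hlt haa) h3; rewrite ltxx.
Qed.

Lemma lt_parts (x0 a2 a3 a4 a5 y : C) : 0 <= x0 -> 0 <= a2 -> 0 <= a3 -> 0 <= a4 ->
  0 <= a5 -> x0 + (a2 + a3 + a4 + a5) < y ->
  [/\ x0 < y, a2 < y, a3 < y, a4 < y & a5 < y].
Proof.
move=> h0 h2 h3 h4 h5 h.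
have hS : 0 <= a2 + a3 + a4 + a5 by rewrite !addr_ge0.
split; apply: le_lt_trans h.
- by apply: ler_wpDr.
- apply: ler_wpDl => //; do 3 apply: ler_wpDr => //; by rewrite ?addr_ge0.
- apply: ler_wpDl => //; do 2 apply: ler_wpDr => //; apply: ler_wpDl => //; by rewrite ?addr_ge0.
- apply: ler_wpDl => //; apply: ler_wpDr => //; apply: ler_wpDl => //; by rewrite ?addr_ge0.
- apply: ler_wpDl => //; apply: ler_wpDl => //; by rewrite ?addr_ge0.
Qed.

Lemma half_split (s x y : C) : 0 < s -> 0 <= x -> s <= x + y -> y < s / 2 -> s / 2 <= x.
Proof.
move=> hs hx0 h hy.
have hs2 : 0 <= s / 2 by rewrite divr_ge0 // ltW.
rewrite real_leNgt ?ger0_real //; apply/negP => hx.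
have := ltrD hx hy; rewrite -splitr => h2.
by have := le_lt_trans h h2; rewrite ltxx.
Qed.

Lemma half_lt (s : C) : 0 < s -> s / 2 < s.
Proof.
move=> hs; rewrite [X in _ < X]splitr ltrDl divr_gt0 //.
Qed.

Lemma small_eps (s e : C) : 0 < s -> e < s / 2 / 2 ->
  s / 2 / 2 + e < s /\ e + e < s.
Proof.
move=> hs he; have hq : s / 2 / 2 + s / 2 / 2 = s / 2 by rewrite -splitr.
have h1 : s / 2 < s := half_lt _ hs.
split.
  by apply: lt_trans h1; rewrite -[X in _ < X]hq ltrD2l.
by apply: lt_trans h1; rewrite -hq ltrD.
Qed.

Lemma lin1 (al B : C) : 3 + 2 * B < al -> 1 + (al + B) * 2 <= 3 * al.
Proof.
move=> h.
have h1 : 1 + B * 2 <= al.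
  apply: ltW; apply: le_lt_trans h; rewrite mulrC lerD2r ler1n //.
have -> : 3 * al = al + al * 2 by rewrite mulrC -[X in _ = X + _]mulr1 -mulrDr.
by rewrite mulrDl addrA addrAC lerD2r.
Qed.

End S.

Lemma poly_rearr (C : numClosedFieldType) (y x s a : {poly C}) :
  (y + a) - (x + s + a) = y - x - s.
Proof.
rewrite opprD addrA [y + a - _]addrAC addrK opprD addrA //.
Qed.

Theorem corollary4p6 (C : numClosedFieldType) (n : nat) (c : nat -> C) :
  (2 <= n)%N ->
  forall eps : C, 0 < eps ->
  exists M : C, 0 < M /\
    forall a : C, M < `|a| ->
    forall rs1 rs2 : seq C,
      is_root_multiset (shiftp (c n.-1 / n%:R) (g_poly n a)) rs1 ->
      is_root_multiset (f_poly n c a) rs2 ->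
      dF rs1 rs2 < eps.
Proof.
case: n => [|[|m]] //= _ eps heps.
set b := c m.+1 / (m.+2)%:R.
set N : C := (m.+2)%:R.
have hN : 0 < N by rewrite ltr0n.
have hb : b *+ m.+2 = c m.+1 by rewrite /b -mulr_natr divfK // gt_eqF.
set Hp := ('X + b%:P) ^+ m.+2 - 'X^(m.+2) - \sum_(1 <= i < m.+2) c i *: 'X^i.
have hsz : (size Hp <= m.+1)%N := sizeH _ _ _ _ hb.
set K := \sum_(i < size Hp) `|Hp`_i|.
have hK : 0 <= K by apply: sumr_ge0.
have hbnd : forall x, `|Hp.[x]| <= K * (1 + `|x|)^+m := fun x => horner_bound _ _ _ x hsz.
set B := `|b|.
set A2 := K * 4^+(m.+2).
set A3 := K * 3^+m * (2 * N)^+(m.+1) / eps.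
set A4 := K * 3^+m * (4 * N)^+(m.+2).
set A5 := 4 * N * eps.
have h2N : 0 <= 2 * N by rewrite mulr_ge0 ?ltW.
have h4N : 0 <= 4 * N by rewrite mulr_ge0 ?ltW.
have hA2 : 0 <= A2 by rewrite mulr_ge0 ?exprn_ge0.
have h3m : 0 <= K * 3^+m by rewrite mulr_ge0 ?exprn_ge0.
have hA3 : 0 <= A3.
  apply: mulr_ge0; last by rewrite invr_ge0 ltW.
  by apply: mulr_ge0 => //; apply: exprn_ge0.
have hA4 : 0 <= A4 by apply: mulr_ge0 => //; apply: exprn_ge0.
have hA5 : 0 <= A5 by apply: mulr_ge0 => //; apply: ltW.
have hB : 0 <= 3 + 2 * B by apply: addr_ge0; [by rewrite ler0n | apply: mulr_ge0; [by rewrite ler0n | exact: normr_ge0]].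
exists (3 + 2 * B + (A2 + A3 + A4 + A5)).
split.
  apply: ltr_wpDr; first by rewrite !addr_ge0.
  apply: ltr_wpDr; [apply: mulr_ge0; [by rewrite ler0n | exact: normr_ge0] | by rewrite ltr0n].
move=> a ha rs1 rs2 h1 h2.
have [L1 L2 L3 L4 L5] := @lt_parts C _ _ _ _ _ _ hB hA2 hA3 hA4 hA5 ha.
set al := `|a| in L1 L2 L3 L4 L5 ha.
have hB0 : 0 <= B := normr_ge0 b.
have a1 : 1 <= al.
  apply: ltW; apply: le_lt_trans L1.
  by rewrite -[X in X <= _]addr0 lerD ?mulr_ge0 ?ler0n // ler1n.
have a0 : 0 < al by apply: lt_le_trans a1; exact: ltr01.
have L3' : K * 3^+m * (2 * N)^+(m.+1) < eps * al.
  by move: L3; rewrite /A3 ltr_pdivrMr // [al * _]mulrC.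
set G := shiftp b (g_poly m.+2 a) in h1.
set F := f_poly m.+2 c a in h2.
have hG : G = ('X + b%:P)^+m.+2 + (a^+m.+2)%:P.
  by rewrite /G /shiftp /g_poly comp_polyD comp_Xn_poly comp_polyC.
have hGf : G - F = Hp by rewrite hG /F /f_poly poly_rearr.
have hev1 : forall x, G.[x] = \prod_(v <- rs1) (x - v).
  by move=> x; rewrite h1 horner_prod; apply: eq_bigr => v _; rewrite hornerXsubC.
have hev2 : forall x, F.[x] = \prod_(r <- rs2) (x - r).
  by move=> x; rewrite h2 horner_prod; apply: eq_bigr => v _; rewrite hornerXsubC.
have hdiff : forall x, G.[x] - F.[x] = Hp.[x] by move=> x; rewrite -hGf hornerD hornerN.
have hrootv : forall v, v \in rs1 -> (v + b)^+m.+2 = - a^+m.+2.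
  move=> v hv; have : root G v by rewrite h1 root_prod_XsubC.
  by rewrite hG /root !hornerE addr_eq0 => /eqP.
have hrootr : forall r, r \in rs2 -> F.[r] = 0.
  by move=> r hr; apply/eqP; rewrite -/(root F r) h2 root_prod_XsubC.
have hnv : forall v, v \in rs1 -> `|v + b| = al.
  move=> v hv; apply/eqP; rewrite -(@eqrXn2 _ m.+2) // ?normr_ge0 // /al.
  rewrite -[`|v + b| ^+ _]normrX -[`|a| ^+ _]normrX hrootv // normrN //.
have hvB : forall v, v \in rs1 -> `|v| <= al + B.
  move=> v hv; have -> : v = (v + b) - b by rewrite addrK.
  by rewrite -(hnv v hv) ler_normB.
move: h1 h2; rewrite /is_root_multiset => h1 h2.
have sz1 : size rs1 = m.+2.
  have := congr1 (fun p : {poly C} => size p) h1; rewrite size_prod_XsubC hG => hs.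
  apply/eqP; rewrite -eqSS -hs size_polyDl.
    by rewrite -[b]opprK polyCN size_exp_XsubC.
  by rewrite -[b]opprK polyCN size_exp_XsubC ltnS (leq_trans (size_polyC_leq1 _)).
have sz2 : size rs2 = m.+2.
  have := congr1 (fun p : {poly C} => size p) h2; rewrite size_prod_XsubC /F /f_poly => hs.
  have hS : (size (\sum_(1 <= i < m.+2) c i *: 'X^i)%R <= m.+2)%N.
    apply: leq_trans (size_sum _ _ _) _; apply/bigmax_leqP_seq => i hi _.
    apply: leq_trans (size_scale_leq _ _) _; rewrite size_polyXn.
    by move: hi; rewrite mem_index_iota => /andP [_ ->].
  apply/eqP; rewrite -eqSS -hs size_polyDl.
    by rewrite size_polyDl size_polyXn // ltnS.
  rewrite size_polyDl size_polyXn ?ltnS //.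
  by rewrite (leq_trans (size_polyC_leq1 _)).
have u1 : uniq rs1.
  apply: uniq_of_norem => x hx hr.
  have := deriv_double _ _ _ hx hr; rewrite -h1 hG derivD derivC addr0 deriv_exp.
  rewrite derivD derivX derivC addr0 mul1r hornerMn horner_exp !hornerE.
  move/eqP; rewrite mulrn_eq0 /= expf_eq0 /= => /eqP hx0.
  by have := hnv x hx; rewrite hx0 normr0 => hal; move: a0; rewrite -hal ltxx.
set s := al / N.
have hsep : forall v v', v \in rs1 -> v' \in rs1 -> v != v' -> s <= `|v - v'|.
  move=> v v' hv hv' hne.
  have hpow : (v + b)^+m.+2 = (v' + b)^+m.+2 by rewrite !hrootv.
  have hne' : v + b != v' + b by apply: contra hne => /eqP /addIr ->.
  have := sep _ _ _ _ (isT : (0 < m.+2)%N) hpow hne'.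
  rewrite hnv // opprD addrACA subrr addr0 => h.
  by rewrite /s ler_pdivrMr // mulrC.
have s0 : 0 < s by rewrite /s divr_gt0.
have heq : eps < s / 2 / 2.
  rewrite !ltr_pdivlMr // ?ltr0n //.
  have -> : eps * 2 * 2 * N = 4 * N * eps.
    by rewrite -(mulrA eps 2 2) -natrM /= [eps * _]mulrC [RHS]mulrC mulrA [(2*2)%:R * eps]mulrC.
  exact: L5.
have [hqe hee] := small_eps _ _ _ s0 heq.
have es2 : al / (2 * N) = s / 2 by rewrite /s invfM [2^-1 * _]mulrC mulrA.
have es4 : al / (4 * N) = s / 2 / 2.
  rewrite -es2 (_ : 4 = 2 * 2 :> C) ?(natrM _ 2 2) // -mulrA invfM mulrA.
  by rewrite mulrAC.
have lin := lin1 _ _ _ L1.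
have hB2 : forall x : C, 0 <= x -> x <= x * 2.
  by move=> x hx; apply: ler_peMr => //; rewrite ler1n.
have hA : forall r, r \in rs2 -> exists2 v, v \in rs1 & `|v - r| < eps.
  move=> r hr.
  case: (boolP (has (fun v => `|v - r| < eps) rs1)) => [/hasP [v hv hvr] | hno].
    by exists v.
  exfalso.
  have hno' : forall v, v \in rs1 -> eps <= `|r - v|.
    move=> v hv; rewrite distrC real_leNgt ?ger0_real ?normr_ge0 ?ltW //.
    exact: (hasPn hno v hv).
  have hGr : G.[r] = Hp.[r] by rewrite -hdiff hrootr // subr0.
  have hprod : \prod_(v <- rs1) `|r - v| <= K * (1 + `|r|)^+m.
    by rewrite -normr_prod -hev1 hGr; exact: hbnd.
  have hT : 1 + `|r| <= 3 * al.
    case: (boolP ((al + B) * 2 <= `|r|)) => hc; last first.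
      apply: le_trans lin; rewrite lerD2l ltW //.
      have hR : (al + B) * 2 \is Num.real.
        by apply: ger0_real; rewrite mulr_ge0 ?ler0n // addr_ge0 // ltW.
      by rewrite real_ltNge ?normr_real.
    exfalso.
    have hr1 : 1 <= `|r|.
      apply: (le_trans _ hc); apply: (le_trans _ (hB2 _ (addr_ge0 (ltW a0) hB0))).
      by apply: (le_trans a1); rewrite lerDl.
    have hlow : forall v, v \in rs1 -> (1 + `|r|) / 4 <= `|r - v|.
      move=> v hv; apply: (le_trans _ (lerB_dist _ _)).
      have h1' : `|v| <= `|r| / 2.
        by apply: (le_trans (hvB v hv)); rewrite ler_pdivlMr ?ltr0n.
      apply: (@le_trans _ _ (`|r| - `|r| / 2)); last by rewrite lerD2l lerN2.
      rewrite {2}[`|r|]splitr addrK.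
      rewrite (_ : 4 = 2 * 2 :> C) ?(natrM _ 2 2) // invfM mulrA ler_pM2r ?invr_gt0 //.
      by rewrite ler_pdivrMr // mulr_natr mulr2n lerD2r.
    apply: (ineqA _ (1 + `|r|) K al m) => //.
    - by rewrite lerDl.
    - apply: (le_lt_trans _ (_ : `|r| < 1 + `|r|)); last by rewrite ltrDr.
      apply: (le_trans _ hc); apply: (le_trans _ (hB2 _ (addr_ge0 (ltW a0) hB0))).
      by rewrite lerDl.
    - apply: (le_trans _ hprod).
      have := prod_ge _ rs1 (fun _ => true) (fun v => `|r - v|) ((1 + `|r|) / 4) _ _.
      rewrite count_predT sz1; apply => //.
        by rewrite divr_ge0 // addr_ge0.
      by move=> v hv _; apply: hlow.
  have [v0 hv0 hoth] : exists2 v0, v0 \in rs1 &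
      forall v, v \in rs1 -> v != v0 -> s / 2 <= `|r - v|.
    case: (boolP (has (fun v => `|r - v| < s / 2) rs1)) => [/hasP [v0 hv0 h0] | hno2].
      exists v0 => // v hv hne.
      apply: (half_split _ _ _ (`|r - v0|)) => //.
      by apply: (le_trans (hsep v v0 hv hv0 hne)); rewrite (distrC r v) ler_distD.
    have hne : (0 < size rs1)%N by rewrite sz1.
    exists (nth 0 rs1 0); first exact: mem_nth.
    move=> v hv _; rewrite real_leNgt ?ger0_real ?normr_ge0 ?divr_ge0 ?ltW //.
    exact: (hasPn hno2 v hv).
  have hcnt : count (fun v => v != v0) rs1 = m.+1.
    have := count_predC (pred1 v0) rs1; rewrite sz1.
    have -> : count (pred1 v0) rs1 = 1%N by rewrite (count_uniq_mem _ u1) hv0.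
    by rewrite add1n => /eqP; rewrite eqSS => /eqP.
  apply: (ineqB _ al K eps N m) => //.
  rewrite es2.
  have hKT : K * (1 + `|r|)^+m <= K * (3 * al)^+m.
    by apply: ler_wpM2l => //; apply: pow_le => //; apply: addr_ge0.
  apply: (le_trans _ hKT).
  apply: (le_trans _ hprod).
  rewrite (bigD1_seq v0 hv0 u1) /=.
  apply: ler_pM.
  - exact: ltW heps.
  - by apply: exprn_ge0; rewrite divr_ge0 ?ltW.
  - exact: hno' v0 hv0.
  rewrite -hcnt; apply: prod_ge; first by rewrite divr_ge0 ?ltW.
  by move=> v hv hne; apply: hoth.
have hBq : forall v, v \in rs1 -> exists2 r, r \in rs2 & `|v - r| < eps.
  move=> v hv.
  have hGv : G.[v] = 0 by apply/eqP; rewrite -/(root G v) h1 root_prod_XsubC.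
  have hFv : F.[v] = - Hp.[v].
    by have := hdiff v; rewrite hGv sub0r => <-; rewrite opprK.
  have hT : 1 + `|v| <= 3 * al.
    apply: (le_trans _ lin); rewrite lerD2l.
    apply: (le_trans (hvB v hv)); exact: hB2 _ (addr_ge0 (ltW a0) hB0).
  have hprod : \prod_(r <- rs2) `|v - r| <= K * (3 * al)^+m.
    rewrite -normr_prod -hev2 hFv normrN; apply: (le_trans (hbnd v)).
    by apply: ler_wpM2l => //; apply: pow_le => //; apply: addr_ge0.
  case: (boolP (has (fun r => `|v - r| < s / 2 / 2) rs2)) => [/hasP [r hr hvr] | hno].
    have [v' hv' hv'r] := hA r hr.
    exists r => //.
    case: (eqVneq v v') => [-> //|hne].
    exfalso; have := hsep v v' hv hv' hne => hs.
    have : `|v - v'| < s / 2 / 2 + eps.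
      apply: (le_lt_trans (ler_distD r v v')); apply: ltrD => //.
      by rewrite distrC.
    move=> h; have := lt_trans h hqe => h'.
    by have := le_lt_trans hs h'; rewrite ltxx.
  exfalso.
  apply: (ineqC _ al K N m) => //.
  rewrite es4; apply: (le_trans _ hprod).
  have := prod_ge _ rs2 (fun _ => true) (fun r => `|v - r|) (s / 2 / 2) _ _.
  rewrite count_predT sz2; apply => //.
    by rewrite !divr_ge0 // ltW.
  move=> r hr _; rewrite real_leNgt ?ger0_real ?normr_ge0 ?divr_ge0 ?ltW //.
  exact: (hasPn hno r hr).
apply: (matching _ _ _ _ heps u1) => //.
- by rewrite sz1 sz2.
- move=> v v' r hv hv' h h'.
  case: (eqVneq v v') => // hne; exfalso.
  have hs := hsep v v' hv hv' hne.
  have : `|v - v'| < eps + eps.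
    apply: (le_lt_trans (ler_distD r v v')); apply: ltrD => //.
    by rewrite distrC.
  move=> hh; have := lt_trans hh hee => h''.
  by have := le_lt_trans hs h''; rewrite ltxx.
Qed.
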